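(* Let $\psi=\Gamma'/\Gamma$ be the digamma function. For all $z>0$, $\frac1{2z}<\psi\big(z+\tfrac12\big)-\psi(z)<\ln\big(1+\tfrac1{2z}\big)+\frac1z-\frac2{2z+1}$. *)

(* Defs.v *)
From Stdlib Require Import Reals.
From Coquelicot Require Import Coquelicot.
Open Scope R_scope.

Definition Gamma (z : R) : R :=
  RInt_gen (fun t => Rpower t (z - 1) * exp (- t))
           (at_right 0) (Rbar_locally p_infty).

Definition digamma (z : R) : R := Derive Gamma z / Gamma z.

(* Main.v *)
Require Import Defs.
From Stdlib Require Import Reals.
From Coquelicot Require Import Coquelicot.
From Stdlib Require Import Lra Lia Psatz ZArith.
Open Scope R_scope.

Lemma ln_le_sub1 y : 0 < y -> ln y <= y - 1.
Proof. intros Hy. pose proof (exp_ineq1_le (ln y)). rewrite exp_ln in H; lra. Qed.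

Lemma ln_ge_1inv y : 0 < y -> 1 - / y <= ln y.
Proof. intros Hy. pose proof (ln_le_sub1 (/ y) (Rinv_0_lt_compat _ Hy)).
  rewrite ln_Rinv in H; lra. Qed.

Lemma exp_convex l p q : 0 <= l <= 1 ->
  exp (l * p + (1 - l) * q) <= l * exp p + (1 - l) * exp q.
Proof.
  intros Hl. set (m := l * p + (1 - l) * q).
  assert (Ep : exp p = exp m * exp (p - m)) by (rewrite <- exp_plus; f_equal; ring).
  assert (Eq : exp q = exp m * exp (q - m)) by (rewrite <- exp_plus; f_equal; ring).
  pose proof (exp_ineq1_le (p - m)). pose proof (exp_ineq1_le (q - m)).
  pose proof (exp_pos m).
  rewrite Ep, Eq.
  assert (l * (exp m * exp (p - m)) >= l * (exp m * (1 + (p - m)))) by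
    (apply Rle_ge, Rmult_le_compat_l; [lra|]; apply Rmult_le_compat_l; lra).
  assert ((1-l) * (exp m * exp (q - m)) >= (1-l) * (exp m * (1 + (q - m)))) by
    (apply Rle_ge, Rmult_le_compat_l; [lra|]; apply Rmult_le_compat_l; lra).
  assert (l * (exp m * (1 + (p - m))) + (1-l) * (exp m * (1 + (q - m))) = exp m)
    by (unfold m; ring).
  lra.
Qed.

Lemma lim_inv_n : is_lim_seq (fun n => / (INR n + 1)) 0.
Proof.
  assert (H : is_lim_seq (fun n => INR n + 1) p_infty).
  { apply is_lim_seq_plus with p_infty 1. apply is_lim_seq_INR. apply is_lim_seq_const.
    simpl. reflexivity. }
  apply (is_lim_seq_inv _ _ H). discriminate.
Qed.

Lemma lim_squeeze0 (u : nat -> R) C : (forall n, 0 <= u n <= C / (INR n + 1)) ->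
  is_lim_seq u 0.
Proof.
  intros H. apply is_lim_seq_le_le with (fun _ => 0) (fun n => C * / (INR n + 1)).
  intros n; specialize (H n); unfold Rdiv in H; lra.
  apply is_lim_seq_const.
  replace (Finite 0) with (Rbar_mult C 0) by (simpl; f_equal; ring).
  apply is_lim_seq_scal_l, lim_inv_n.
Qed.

Lemma exp_le_exp x y : x <= y -> exp x <= exp y.
Proof. intros [H|H]. left; apply exp_increasing; auto. subst; lra. Qed.

Lemma ln_le x y : 0 < x -> x <= y -> ln x <= ln y.
Proof. intros Hx [H|H]. left; apply ln_increasing; auto. subst; lra. Qed.

Definition g (x t : R) : R := Rpower t (x - 1) * exp (- t).

Lemma gE x t : g x t = exp ((x - 1) * ln t - t).
Proof. unfold g, Rpower. rewrite <- exp_plus. f_equal; ring. Qed.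

Lemma g_pos x t : 0 < g x t.
Proof. rewrite gE; apply exp_pos. Qed.

Lemma g_cont x t : 0 < t -> continuous (g x) t.
Proof.
  intros Ht. apply (ex_derive_continuous (K:=R_AbsRing) (V:=R_NormedModule)). unfold g, Rpower.
  auto_derive. exact Ht.
Qed.

Lemma ex_RInt_g x a b : 0 < a -> 0 < b -> ex_RInt (g x) a b.
Proof.
  intros Ha Hb. apply (ex_RInt_continuous (V:=R_CompleteNormedModule)). intros z Hz. apply g_cont.
  assert (0 < Rmin a b) by (apply Rmin_glb_lt; lra). lra.
Qed.

Lemma RInt_g_chasles x a b c : 0 < a -> 0 < b -> 0 < c ->
  RInt (g x) a c = RInt (g x) a b + RInt (g x) b c.
Proof.
  intros. symmetry. apply (RInt_Chasles (V:=R_CompleteNormedModule)); apply ex_RInt_g; lra.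
Qed.

Lemma RInt_g_nonneg x a b : 0 < a <= b -> 0 <= RInt (g x) a b.
Proof.
  intros H. apply RInt_ge_0. lra. apply ex_RInt_g; lra. intros; apply Rlt_le, g_pos.
Qed.

Lemma RInt_g_mono x a' a b b' : 0 < a' -> a' <= a -> a <= b -> b <= b' ->
  RInt (g x) a b <= RInt (g x) a' b'.
Proof.
  intros. rewrite (RInt_g_chasles x a' a b'), (RInt_g_chasles x a b b'); try lra.
  pose proof (RInt_g_nonneg x a' a). pose proof (RInt_g_nonneg x b b'). lra.
Qed.

Lemma g_tail x : exists K, 0 < K /\ forall t, 1 <= t -> g x t <= K * exp (- t / 2).
Proof.
  set (M := Rabs (x - 1) + 1).
  assert (HM : 0 < M) by (unfold M; pose proof (Rabs_pos (x-1)); lra).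
  exists (exp (M * (ln (2 * M) - 1))). split. apply exp_pos.
  intros t Ht. rewrite gE, <- exp_plus. apply exp_le_exp.
  assert (Hl : 0 <= ln t) by (rewrite <- ln_1; apply ln_le; lra).
  assert (H1 : (x - 1) * ln t <= M * ln t).
  { apply Rmult_le_compat_r; [lra|]. unfold M. pose proof (Rle_abs (x-1)); lra. }
  assert (H2 : ln t <= t / (2 * M) - 1 + ln (2 * M)).
  { replace t with ((t / (2 * M)) * (2 * M)) at 1 by (field; lra).
    rewrite ln_mult. pose proof (ln_le_sub1 (t / (2*M))). 
    assert (0 < t / (2 * M)) by (apply Rdiv_lt_0_compat; lra). specialize (H H0). lra.
    apply Rdiv_lt_0_compat; lra. lra. }
  assert (H3 : M * ln t <= M * (t / (2 * M) - 1 + ln (2 * M))) by (apply Rmult_le_compat_l; lra).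
  assert (E : M * (t / (2 * M) - 1 + ln (2 * M)) = t / 2 + M * (ln (2 * M) - 1)) by (field; lra).
  lra.
Qed.

Lemma RInt_head x a : 0 < x -> 0 < a <= 1 -> RInt (g x) a 1 <= 1 / x.
Proof.
  intros Hx Ha.
  set (F := fun t => exp (x * ln t) / x).
  set (f := fun t => exp ((x - 1) * ln t)).
  assert (HI : is_RInt f a 1 (minus (F 1) (F a))).
  { apply (is_RInt_derive (V:=R_CompleteNormedModule)).
    - intros t Ht. rewrite Rmin_left, Rmax_right in Ht by lra.
      unfold F, f. auto_derive. lra.
      replace ((x - 1) * ln t) with (x * ln t + - ln t) by ring.
      rewrite exp_plus, exp_Ropp, exp_ln by lra. field. split; lra.
    - intros t Ht. rewrite Rmin_left, Rmax_right in Ht by lra.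
      apply (ex_derive_continuous (K:=R_AbsRing) (V:=R_NormedModule)).
      unfold f. auto_derive. lra. }
  apply Rle_trans with (RInt f a 1).
  - apply RInt_le. lra. apply ex_RInt_g; lra. exists (minus (F 1) (F a)); exact HI.
    intros t Ht. unfold g, f, Rpower. rewrite <- (Rmult_1_r (exp _)) at 2.
    apply Rmult_le_compat_l. left; apply exp_pos.
    rewrite <- exp_0. apply exp_le_exp. lra.
  - rewrite (is_RInt_unique _ _ _ _ HI). unfold minus, plus, opp, F; simpl.
    rewrite ln_1, Rmult_0_r, exp_0. 
    assert (0 <= exp (x * ln a) / x) by (apply Rdiv_le_0_compat; [left; apply exp_pos|lra]).
    lra.
Qed.

Lemma RInt_tail x b K : 1 <= b -> 0 < K -> (forall t, 1 <= t -> g x t <= K * exp (- t / 2)) ->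
  RInt (g x) 1 b <= 2 * K.
Proof.
  intros Hb HK HT.
  set (F := fun t => - 2 * K * exp (- t / 2)).
  set (f := fun t => K * exp (- t / 2)).
  assert (HI : is_RInt f 1 b (minus (F b) (F 1))).
  { apply (is_RInt_derive (V:=R_CompleteNormedModule)).
    - intros t Ht. unfold F, f. auto_derive. easy. assert (E: exp (- t * / 2) = exp (- t / 2)) by (f_equal; unfold Rdiv; ring). rewrite E; field.
    - intros t Ht.
      apply (ex_derive_continuous (K:=R_AbsRing) (V:=R_NormedModule)).
      unfold f. auto_derive. easy. }
  apply Rle_trans with (RInt f 1 b).
  - apply RInt_le. lra. apply ex_RInt_g; lra. exists (minus (F b) (F 1)); exact HI.
    intros t Ht. apply HT; lra.
  - rewrite (is_RInt_unique _ _ _ _ HI). unfold minus, plus, opp, F; simpl.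
    pose proof (exp_pos (- b / 2)).
    assert (exp (- (1) / 2) <= 1) by (apply Rle_trans with (exp 0); [apply exp_le_exp; lra | rewrite exp_0; lra]).
    assert (K * exp (- (1) / 2) <= K * 1) by (apply Rmult_le_compat_l; lra).
    assert (0 <= K * exp (- b / 2)) by (apply Rmult_le_pos; lra).
    lra.
Qed.

Lemma RInt_bound x : 0 < x -> exists B, forall a b, 0 < a <= b -> RInt (g x) a b <= B.
Proof.
  intros Hx. destruct (g_tail x) as [K [HK HT]].
  exists (1 / x + 2 * K). intros a b Hab.
  apply Rle_trans with (RInt (g x) (Rmin a 1) (Rmax b 1)).
  { apply RInt_g_mono. apply Rmin_glb_lt; lra. apply Rmin_l. lra. apply Rmax_l. }
  rewrite (RInt_g_chasles x _ 1). 
  pose proof (RInt_head x (Rmin a 1) Hx). pose proof (RInt_tail x (Rmax b 1) K).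
  assert (0 < Rmin a 1 <= 1) by (split; [apply Rmin_glb_lt; lra | apply Rmin_r]).
  assert (1 <= Rmax b 1) by apply Rmax_r.
  specialize (H H1). specialize (H0 H2 HK HT). lra.
  apply Rmin_glb_lt; lra. lra. pose proof (Rmax_r b 1); lra.
Qed.

Lemma archi (r : R) : exists n : nat, r < INR n.
Proof.
  destruct (archimed r) as [H1 H2].
  destruct (Z_le_gt_dec 0 (up r)) as [Hz|Hz].
  - exists (Z.to_nat (up r)). rewrite INR_IZR_INZ, Z2Nat.id by lia. lra.
  - exists 0%nat. simpl. assert (Hz2 : (up r < 0)%Z) by lia. apply IZR_lt in Hz2. lra.
Qed.

Definition aseq (n : nat) : R := exp (- (INR n + 1)).
Definition bseq (n : nat) : R := INR n + 1.
Definition sq (x : R) (n : nat) : R := RInt (g x) (aseq n) (bseq n).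

Lemma aseq_pos n : 0 < aseq n.
Proof. apply exp_pos. Qed.

Lemma aseq_lt1 n : aseq n < 1.
Proof. unfold aseq. rewrite <- exp_0 at 2. apply exp_increasing. pose proof (pos_INR n). lra. Qed.

Lemma bseq_ge1 n : 1 <= bseq n.
Proof. unfold bseq. pose proof (pos_INR n). lra. Qed.

Lemma sq_incr x n : sq x n <= sq x (S n).
Proof.
  unfold sq. apply RInt_g_mono.
  - apply aseq_pos.
  - unfold aseq. apply exp_le_exp. rewrite S_INR. lra.
  - pose proof (aseq_lt1 n). pose proof (bseq_ge1 n). lra.
  - unfold bseq. rewrite S_INR. lra.
Qed.

Lemma sq_incr_le x n m : (n <= m)%nat -> sq x n <= sq x m.
Proof.
  induction 1. lra. pose proof (sq_incr x m). lra.
Qed.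

Lemma seq_cover a b : 0 < a -> exists m, aseq m <= a /\ b <= bseq m.
Proof.
  intros Ha. destruct (archi (Rmax (- ln a) b)) as [m Hm].
  exists m. split.
  - unfold aseq. rewrite <- (exp_ln a) by exact Ha. apply exp_le_exp.
    pose proof (Rmax_l (- ln a) b). lra.
  - unfold bseq. pose proof (Rmax_r (- ln a) b). lra.
Qed.

Lemma Gamma_lim x : 0 < x -> is_lim_seq (sq x) (Gamma x).
Proof.
  intros Hx.
  destruct (RInt_bound x Hx) as [Bd HB].
  assert (Hex : ex_finite_lim_seq (sq x)).
  { apply ex_finite_lim_seq_incr with Bd. apply sq_incr.
    intros n. apply HB. split. apply aseq_pos. pose proof (aseq_lt1 n); pose proof (bseq_ge1 n); lra. }
  destruct Hex as [l Hl].
  assert (Hle : forall n, sq x n <= l) by (apply is_lim_seq_incr_compare; [exact Hl | apply sq_incr]).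
  assert (HG : is_RInt_gen (g x) (at_right 0) (Rbar_locally p_infty) l).
  { intros P [eps HP].
    apply is_lim_seq_Reals in Hl.
    destruct (Hl eps (cond_pos eps)) as [N HN].
    specialize (HN N (Nat.le_refl N)). unfold R_dist in HN.
    pose proof (Hle N) as HlN.
    apply Filter_prod with (fun a => 0 < a /\ a < aseq N) (fun b => bseq N < b).
    - exists (mkposreal _ (aseq_pos N)). intros y Hy Hy0. split. exact Hy0.
      unfold ball in Hy; simpl in Hy. unfold AbsRing_ball, abs, minus, plus, opp in Hy; simpl in Hy.
      apply Rabs_def2 in Hy. lra.
    - exists (bseq N). auto.
    - intros a b [Ha0 Ha] Hb. simpl.
      pose proof (aseq_lt1 N). pose proof (bseq_ge1 N).
      exists (RInt (g x) a b). split.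
      + apply (RInt_correct (V:=R_CompleteNormedModule)). apply ex_RInt_g; lra.
      + apply HP. unfold ball; simpl. unfold AbsRing_ball, abs, minus, plus, opp; simpl.
        assert (H1 : sq x N <= RInt (g x) a b) by (apply RInt_g_mono; lra).
        destruct (seq_cover a b Ha0) as [m [Hm1 Hm2]].
        assert (H2 : RInt (g x) a b <= sq x m) by (apply RInt_g_mono; try lra; apply aseq_pos).
        pose proof (Hle m).
        apply Rabs_def1; apply Rabs_def2 in HN; lra. }
  replace (Gamma x) with l. exact Hl.
  symmetry. unfold Gamma. apply (is_RInt_gen_unique (V:=R_CompleteNormedModule)). exact HG.
Qed.

Lemma Gamma_pos x : 0 < x -> 0 < Gamma x.
Proof.
  intros Hx. pose proof (Gamma_lim x Hx) as Hl.
  assert (H0 : 0 < sq x 0).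
  { unfold sq. apply RInt_gt_0. pose proof (aseq_lt1 0); pose proof (bseq_ge1 0); lra.
    intros; apply g_pos. intros t Ht. apply g_cont. pose proof (aseq_pos 0). lra. }
  assert (H1 : sq x 0 <= Gamma x).
  { apply is_lim_seq_incr_compare. exact Hl. apply sq_incr. }
  lra.
Qed.

Lemma g_shift x t : 0 < t -> g x t = g (x + 1) t / t.
Proof.
  intros Ht. rewrite !gE.
  replace ((x + 1 - 1) * ln t - t) with (((x - 1) * ln t - t) + ln t) by ring.
  rewrite exp_plus, exp_ln by exact Ht. field. lra.
Qed.

Lemma sq_rec x n : 0 < x -> sq (x + 1) n - x * sq x n = g (x + 1) (aseq n) - g (x + 1) (bseq n).
Proof.
  intros Hx. unfold sq.
  pose proof (aseq_pos n) as Ha. pose proof (aseq_lt1 n). pose proof (bseq_ge1 n).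
  set (a := aseq n) in *. set (b := bseq n) in *.
  set (F := fun t => - exp (x * ln t - t)).
  assert (H1 : is_RInt (fun y => minus (g (x+1) y) (scal x (g x y))) a b (minus (F b) (F a))).
  { apply (is_RInt_derive (V:=R_CompleteNormedModule)).
    - intros t Ht. rewrite Rmin_left, Rmax_right in Ht by lra.
      unfold F. auto_derive. lra.
      rewrite (g_shift x t) by lra. rewrite gE.
      replace ((x + 1 - 1) * ln t - t) with (x * ln t - t) by ring.
      unfold minus, plus, opp, scal; simpl. unfold mult; simpl. unfold Rminus. field. lra.
    - intros t Ht. rewrite Rmin_left, Rmax_right in Ht by lra.
      apply (continuous_minus (K:=R_AbsRing) (V:=R_NormedModule)).
      apply g_cont; lra.
      apply (continuous_scal_r (K:=R_AbsRing) (V:=R_NormedModule)). apply g_cont; lra. }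
  assert (H2 : is_RInt (fun y => minus (g (x+1) y) (scal x (g x y))) a b
                 (minus (RInt (g (x+1)) a b) (scal x (RInt (g x) a b)))).
  { apply (is_RInt_minus (V:=R_NormedModule)).
    apply (RInt_correct (V:=R_CompleteNormedModule)). apply ex_RInt_g; lra.
    apply (is_RInt_scal (V:=R_NormedModule)).
    apply (RInt_correct (V:=R_CompleteNormedModule)). apply ex_RInt_g; lra. }
  pose proof (is_RInt_unique _ _ _ _ H1) as E1.
  pose proof (is_RInt_unique _ _ _ _ H2) as E2.
  rewrite E1 in E2. unfold minus, plus, opp, scal, F in E2; simpl in E2. unfold mult in E2; simpl in E2.
  rewrite !gE. replace ((x + 1 - 1) * ln a - a) with (x * ln a - a) by ring.
  replace ((x + 1 - 1) * ln b - b) with (x * ln b - b) by ring.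
  lra.
Qed.

Lemma exp_neg_le u : 0 <= u -> exp (- u) <= / (1 + u).
Proof.
  intros Hu. rewrite exp_Ropp. apply Rinv_le_contravar. lra. apply exp_ineq1_le.
Qed.

Lemma Gamma_rec x : 0 < x -> Gamma (x + 1) = x * Gamma x.
Proof.
  intros Hx.
  assert (L1 : is_lim_seq (fun n => sq (x + 1) n - x * sq x n) (Gamma (x+1) - x * Gamma x)).
  { apply is_lim_seq_minus'. apply Gamma_lim; lra.
    apply (is_lim_seq_scal_l _ x (Gamma x)), Gamma_lim; lra. }
  assert (L2 : is_lim_seq (fun n => g (x + 1) (aseq n) - g (x + 1) (bseq n)) (0 - 0)).
  { apply is_lim_seq_minus'.
    - apply lim_squeeze0 with (/ x). intros n. split. apply Rlt_le, g_pos.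
      rewrite gE. unfold aseq at 1. rewrite ln_exp.
      pose proof (pos_INR n). pose proof (aseq_pos n).
      apply Rle_trans with (exp (- (x * (INR n + 1)))).
      apply exp_le_exp. nra.
      apply Rle_trans with (/ (1 + x * (INR n + 1))). apply exp_neg_le. nra.
      unfold Rdiv. rewrite <- Rinv_mult. apply Rinv_le_contravar. nra. nra.
    - destruct (g_tail (x + 1)) as [K [HK HT]].
      apply lim_squeeze0 with (2 * K). intros n. split. apply Rlt_le, g_pos.
      pose proof (pos_INR n).
      apply Rle_trans with (K * exp (- bseq n / 2)). apply HT, bseq_ge1.
      unfold bseq. replace (- (INR n + 1) / 2) with (- ((INR n + 1) / 2)) by field.
      apply Rle_trans with (K * / (1 + (INR n + 1) / 2)).
      apply Rmult_le_compat_l. lra. apply exp_neg_le. lra.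
      replace (2 * K / (INR n + 1)) with (K * / ((INR n + 1) / 2)) by (field; lra).
      apply Rmult_le_compat_l. lra. apply Rinv_le_contravar. lra. lra. }
  assert (E : Gamma (x+1) - x * Gamma x = 0 - 0).
  { apply is_lim_seq_unique in L1. apply is_lim_seq_unique in L2.
    assert (Finite (Gamma (x+1) - x * Gamma x) = Finite (0 - 0)).
    { rewrite <- L1, <- L2. apply Lim_seq_ext. intros n. apply sq_rec. exact Hx. }
    injection H. auto. }
  lra.
Qed.

Lemma Gamma_logconv x y l : 0 < x -> 0 < y -> 0 <= l <= 1 ->
  ln (Gamma (l * x + (1 - l) * y)) <= l * ln (Gamma x) + (1 - l) * ln (Gamma y).
Proof.
  intros Hx Hy Hl.
  set (z := l * x + (1 - l) * y).
  assert (Hz : 0 < z) by (unfold z; nra).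
  set (A := Gamma x). set (B := Gamma y).
  assert (HA : 0 < A) by (apply Gamma_pos; lra).
  assert (HB : 0 < B) by (apply Gamma_pos; lra).
  set (C := exp (l * ln A + (1 - l) * ln B)).
  assert (Hpt : forall t, 0 < t -> g z t <= C * (l / A * g x t + (1 - l) / B * g y t)).
  { intros t Ht. rewrite !gE.
    set (P := (x - 1) * ln t - t). set (Q := (y - 1) * ln t - t).
    replace ((z - 1) * ln t - t) with ((l * ln A + (1 - l) * ln B) + (l * (P - ln A) + (1 - l) * (Q - ln B)))
      by (unfold z, P, Q; ring).
    rewrite exp_plus. fold C. apply Rmult_le_compat_l. left; apply exp_pos.
    apply Rle_trans with (l * exp (P - ln A) + (1 - l) * exp (Q - ln B)).
    apply exp_convex; exact Hl.
    unfold Rminus at 1 3. rewrite !exp_plus, !exp_Ropp, !exp_ln by lra.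
    right. unfold Rdiv. ring. }
  assert (Hs : forall n, sq z n <= C * (l / A * sq x n + (1 - l) / B * sq y n)).
  { intros n. unfold sq.
    pose proof (aseq_pos n) as Ha. pose proof (aseq_lt1 n). pose proof (bseq_ge1 n).
    set (a := aseq n) in *. set (b := bseq n) in *.
    assert (HI : is_RInt (fun t => scal C (plus (scal (l / A) (g x t)) (scal ((1 - l) / B) (g y t)))) a b
                  (scal C (plus (scal (l / A) (RInt (g x) a b)) (scal ((1 - l) / B) (RInt (g y) a b))))).
    { apply (is_RInt_scal (V:=R_NormedModule)). apply (is_RInt_plus (V:=R_NormedModule));
      apply (is_RInt_scal (V:=R_NormedModule)); apply (RInt_correct (V:=R_CompleteNormedModule));
      apply ex_RInt_g; lra. }
    pose proof (is_RInt_unique _ _ _ _ HI) as EI.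
    unfold scal, plus in EI; simpl in EI; unfold mult in EI; simpl in EI.
    rewrite <- EI. apply RInt_le. lra. apply ex_RInt_g; lra.
    eexists; exact HI.
    intros t Ht. unfold scal, plus; simpl; unfold mult; simpl. apply Hpt. lra. }
  assert (Hlim : is_lim_seq (fun n => C * (l / A * sq x n + (1 - l) / B * sq y n))
                   (C * (l / A * A + (1 - l) / B * B))).
  { apply (is_lim_seq_scal_l _ C (l / A * A + (1 - l) / B * B)).
    apply is_lim_seq_plus'; apply (is_lim_seq_scal_l _ _ (Finite _)); apply Gamma_lim; lra. }
  pose proof (is_lim_seq_le _ _ _ _ Hs (Gamma_lim z Hz) Hlim) as Hle. simpl in Hle.
  replace (C * (l / A * A + (1 - l) / B * B)) with C in Hle by (field; lra).
  apply Rle_trans with (ln C). apply ln_le. apply Gamma_pos; lra. exact Hle.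
  unfold C. rewrite ln_exp. lra.
Qed.

Definition L (x : R) : R := ln (Gamma x).

Lemma L_rec x : 0 < x -> L (x + 1) = L x + ln x.
Proof.
  intros Hx. unfold L. rewrite Gamma_rec by exact Hx.
  rewrite ln_mult. ring. exact Hx. apply Gamma_pos; exact Hx.
Qed.

Lemma chord u v w : 0 < u -> u < v -> v < w -> (w - u) * L v <= (w - v) * L u + (v - u) * L w.
Proof.
  intros Hu Huv Hvw.
  set (l := (w - v) / (w - u)).
  assert (Hl : 0 <= l <= 1).
  { unfold l. split. apply Rdiv_le_0_compat; lra.
    apply Rmult_le_reg_r with (w - u). lra. unfold Rdiv. rewrite Rmult_assoc, Rinv_l by lra. lra. }
  pose proof (Gamma_logconv u w l Hu ltac:(lra) Hl) as H.
  replace (l * u + (1 - l) * w) with v in H by (unfold l; field; lra).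
  fold (L v) (L u) (L w) in H.
  assert (E1 : (w - u) * (l * L u + (1 - l) * L w) = (w - v) * L u + (v - u) * L w)
    by (unfold l; field; lra).
  rewrite <- E1. apply Rmult_le_compat_l; lra.
Qed.

Definition slope (z h : R) : R := (L (z + h) - L z) / h.

Lemma div_cmp a b h1 h2 : 0 < h1 -> 0 < h2 -> a * h2 <= b * h1 -> a / h1 <= b / h2.
Proof.
  intros H1 H2 H.
  replace (a / h1) with ((a * h2) * / (h1 * h2)) by (field; lra).
  replace (b / h2) with ((b * h1) * / (h1 * h2)) by (field; lra).
  apply Rmult_le_compat_r. left; apply Rinv_0_lt_compat; nra. exact H.
Qed.

Lemma slope_mono z h1 h2 : 0 < z -> 0 < h1 -> h1 <= h2 -> slope z h1 <= slope z h2.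
Proof.
  intros Hz H1 [H12|H12]; [|subst; lra].
  unfold slope. apply div_cmp; try lra.
  pose proof (chord z (z + h1) (z + h2) Hz ltac:(lra) ltac:(lra)).
  replace (z + h2 - z) with h2 in H by ring. replace (z + h2 - (z + h1)) with (h2 - h1) in H by ring.
  replace (z + h1 - z) with h1 in H by ring. nra.
Qed.

Lemma slope_lower z d h : 0 < d -> d < z -> 0 < h -> (L z - L (z - d)) / d <= slope z h.
Proof.
  intros Hd Hdz Hh. unfold slope. apply div_cmp; try lra.
  pose proof (chord (z - d) z (z + h) ltac:(lra) ltac:(lra) ltac:(lra)).
  replace (z + h - (z - d)) with (d + h) in H by ring. replace (z + h - z) with h in H by ring.
  replace (z - (z - d)) with d in H by ring. nra.
Qed.

Definition hn (n : nat) : R := / (INR n + 1).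

Lemma hn_pos n : 0 < hn n.
Proof. unfold hn. apply Rinv_0_lt_compat. pose proof (pos_INR n); lra. Qed.

Lemma hn_le1 n : hn n <= 1.
Proof. unfold hn. rewrite <- Rinv_1. apply Rinv_le_contravar. lra. pose proof (pos_INR n); lra. Qed.

Lemma hn_decr n : hn (S n) <= hn n.
Proof. unfold hn. apply Rinv_le_contravar. pose proof (pos_INR n); lra. rewrite S_INR. lra. Qed.

Definition sig (z : R) (n : nat) : R := slope z (hn n).
Definition Dg (z : R) : R := real (Lim_seq (sig z)).

Lemma Dg_lim z : 0 < z -> is_lim_seq (sig z) (Dg z).
Proof.
  intros Hz.
  assert (Hex : ex_finite_lim_seq (sig z)).
  { apply ex_finite_lim_seq_decr with ((L z - L (z - z / 2)) / (z / 2)).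
    - intros n. apply slope_mono. exact Hz. apply hn_pos. apply hn_decr.
    - intros n. apply slope_lower. lra. lra. apply hn_pos. }
  pose proof (Lim_seq_correct' _ Hex) as H.
  apply ex_finite_lim_seq_correct in Hex. destruct Hex as [_ Hf].
  unfold Dg. exact H.
Qed.

Lemma Dg_upper w : 0 < w -> Dg w <= ln w.
Proof.
  intros Hw.
  assert (H : forall n, sig w n <= slope w 1) by (intros n; apply slope_mono; [lra|apply hn_pos|apply hn_le1]).
  pose proof (is_lim_seq_le _ _ _ _ H (Dg_lim w Hw) (is_lim_seq_const (slope w 1))) as H2.
  simpl in H2. unfold slope in H2. rewrite L_rec in H2 by lra. lra.
Qed.

Lemma Dg_lower w : 1 < w -> ln (w - 1) <= Dg w.
Proof.
  intros Hw.
  assert (H : forall n, (L w - L (w - 1)) / 1 <= sig w n) by (intros n; apply slope_lower; [lra|lra|apply hn_pos]).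
  pose proof (is_lim_seq_le _ _ _ _ H (is_lim_seq_const _) (Dg_lim w ltac:(lra))) as H2.
  simpl in H2. replace w with ((w - 1) + 1) in H2 at 1 by ring. rewrite L_rec in H2 by lra. lra.
Qed.

Lemma ln_quot_bounds w h : 0 < w -> 0 < h ->
  / (w + h) <= (ln (w + h) - ln w) / h <= / w.
Proof.
  intros Hw Hh.
  set (r := (w + h) / w).
  assert (Hr : 0 < r) by (unfold r; apply Rdiv_lt_0_compat; lra).
  assert (E : ln (w + h) = ln w + ln r).
  { rewrite <- ln_mult by lra. f_equal. unfold r; field; lra. }
  rewrite E. replace (ln w + ln r - ln w) with (ln r) by ring.
  pose proof (ln_le_sub1 r Hr). pose proof (ln_ge_1inv r Hr).
  replace (r - 1) with (h / w) in H by (unfold r; field; lra).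
  replace (1 - / r) with (h / (w + h)) in H0 by (unfold r; field; lra).
  split.
  - replace (/ (w + h)) with ((h / (w + h)) / h) by (field; lra).
    unfold Rdiv. apply Rmult_le_compat_r. left; apply Rinv_0_lt_compat; lra. exact H0.
  - replace (/ w) with ((h / w) / h) by (field; lra).
    unfold Rdiv. apply Rmult_le_compat_r. left; apply Rinv_0_lt_compat; lra. exact H.
Qed.

Lemma Dg_shift w : 0 < w -> Dg (w + 1) = Dg w + / w.
Proof.
  intros Hw.
  assert (Hq : is_lim_seq (fun n => (ln (w + hn n) - ln w) / hn n) (/ w)).
  { apply is_lim_seq_le_le with (fun n => / (w + hn n)) (fun _ => / w).
    intros n. apply ln_quot_bounds. lra. apply hn_pos.
    - replace (Finite (/ w)) with (Rbar_inv (w + 0)) by (simpl; f_equal; f_equal; ring).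
      apply is_lim_seq_inv. apply is_lim_seq_plus'. apply is_lim_seq_const. apply lim_inv_n.
      simpl. intro Hc; injection Hc; lra.
    - apply is_lim_seq_const. }
  assert (H : is_lim_seq (sig (w + 1)) (Dg w + / w)).
  { apply is_lim_seq_ext with (fun n => sig w n + (ln (w + hn n) - ln w) / hn n).
    - intros n. unfold sig, slope. pose proof (hn_pos n).
      replace (w + 1 + hn n) with ((w + hn n) + 1) by ring.
      rewrite !L_rec by lra. field. lra.
    - apply is_lim_seq_plus'. apply Dg_lim; exact Hw. exact Hq. }
  pose proof (is_lim_seq_unique _ _ H) as E1.
  pose proof (is_lim_seq_unique _ _ (Dg_lim (w + 1) ltac:(lra))) as E2.
  rewrite E1 in E2. injection E2. auto.
Qed.

Lemma exp_m1_bounds u : u <= exp u - 1 <= u * exp u.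
Proof.
  split. pose proof (exp_ineq1_le u); lra.
  pose proof (exp_ineq1_le (- u)). rewrite exp_Ropp in H.
  pose proof (exp_pos u).
  assert (H1 : exp u * (1 + - u) <= exp u * / exp u) by (apply Rmult_le_compat_l; lra).
  rewrite Rinv_r in H1 by lra. nra.
Qed.

Lemma digamma_Dg z : 0 < z -> digamma z = Dg z.
Proof.
  intros Hz. pose proof (Gamma_pos z Hz) as HG.
  assert (Hd : is_lim_seq (fun n => (Gamma (z + hn n) - Gamma z) / hn n) (Gamma z * Dg z)).
  { apply is_lim_seq_le_le with (fun n => Gamma z * sig z n)
      (fun n => Gamma z * (sig z n * exp (hn n * sig z n))).
    - intros n. pose proof (hn_pos n) as Hh.
      assert (Ez : Gamma z = exp (L z)) by (unfold L; rewrite exp_ln; lra).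
      assert (Ezh : Gamma (z + hn n) = exp (L (z + hn n))) by (unfold L; rewrite exp_ln; [lra|apply Gamma_pos; lra]).
      set (u := hn n * sig z n).
      assert (Eu : L (z + hn n) = L z + u) by (unfold u, sig, slope; field; lra).
      assert (Eq : (Gamma (z + hn n) - Gamma z) / hn n = Gamma z * ((exp u - 1) / hn n)).
      { rewrite Ezh, Eu, exp_plus, <- Ez. field. lra. }
      rewrite Eq. pose proof (exp_m1_bounds u) as [B1 B2].
      split; apply Rmult_le_compat_l; try lra.
      + replace (sig z n) with (u / hn n) by (unfold u; field; lra).
        unfold Rdiv. apply Rmult_le_compat_r. left; apply Rinv_0_lt_compat; lra. exact B1.
      + replace (sig z n * exp u) with ((u * exp u) / hn n) by (unfold u; field; lra).
        unfold Rdiv. apply Rmult_le_compat_r. left; apply Rinv_0_lt_compat; lra. exact B2.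
    - apply (is_lim_seq_scal_l _ _ (Finite _)), Dg_lim; exact Hz.
    - replace (Gamma z * Dg z) with (Gamma z * (Dg z * exp (0 * Dg z))) by (rewrite Rmult_0_l, exp_0; ring).
      apply (is_lim_seq_scal_l _ _ (Finite _)).
      apply is_lim_seq_mult'. apply Dg_lim; exact Hz.
      apply (is_lim_seq_continuous exp (fun n => hn n * sig z n)).
      apply derivable_continuous_pt, derivable_pt_exp.
      apply is_lim_seq_mult'. apply lim_inv_n. apply Dg_lim; exact Hz. }
  assert (Hd' : is_lim_seq (fun n => (Gamma (z + Rbar_loc_seq 0 n) - Gamma z) / Rbar_loc_seq 0 n) (Gamma z * Dg z)).
  { apply is_lim_seq_ext with (2 := Hd). intros n. simpl. unfold hn. rewrite Rplus_0_l. reflexivity. }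
  unfold digamma, Derive, Lim.
  rewrite (is_lim_seq_unique _ _ Hd').
  simpl. field. lra.
Qed.

Fixpoint Ssum (n : nat) (z : R) : R :=
  match n with O => 0 | S m => Ssum m z + / (z + INR m) end.

Lemma Dg_shift_n z n : 0 < z -> Dg (z + INR n) = Dg z + Ssum n z.
Proof.
  intros Hz. induction n as [|n IH].
  - simpl. rewrite Rplus_0_r. ring.
  - rewrite S_INR. replace (z + (INR n + 1)) with ((z + INR n) + 1) by ring.
    rewrite Dg_shift. rewrite IH. simpl. ring. pose proof (pos_INR n). lra.
Qed.

Definition Fs (z : R) (n : nat) : R := Ssum n z - Ssum n (z + 1 / 2).
Definition gg (x : R) : R := ln (x + 1 / 2) - ln x.
Definition ff (x : R) : R := / x - / (x + 1 / 2).

Lemma Fs_S z n : Fs z (S n) = Fs z n + ff (z + INR n).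
Proof. unfold Fs, ff. simpl. replace (z + 1 / 2 + INR n) with (z + INR n + 1 / 2) by ring. ring. Qed.

Lemma ff_lower x : 0 < x -> / 2 * (/ x - / (x + 1)) <= ff x.
Proof.
  intros Hx.
  assert (E : ff x - / 2 * (/ x - / (x + 1)) = / (4 * x * (x + 1/2) * (x + 1))) by (unfold ff; field; lra).
  assert (0 < / (4 * x * (x + 1/2) * (x + 1))) by (apply Rinv_0_lt_compat; repeat apply Rmult_lt_0_compat; lra).
  lra.
Qed.

Lemma ln4 a b c d : 0 < a -> 0 < b -> 0 < c -> 0 < d ->
  ln ((a * b) * / (c * d)) = ln a + ln b - ln c - ln d.
Proof.
  intros. rewrite ln_mult, ln_Rinv, !ln_mult; try lra; try (apply Rmult_lt_0_compat; lra).
  apply Rinv_0_lt_compat, Rmult_lt_0_compat; lra.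
Qed.

Lemma ff_upper x : 1 / 2 < x -> ff x <= gg (x - 1 / 2) - gg (x + 1 / 2).
Proof.
  intros Hx.
  set (r := (x * (x + 1/2)) * / ((x - 1/2) * (x + 1))).
  assert (Hr : 0 < r) by (unfold r; apply Rmult_lt_0_compat; [apply Rmult_lt_0_compat; lra | apply Rinv_0_lt_compat, Rmult_lt_0_compat; lra]).
  assert (E : gg (x - 1 / 2) - gg (x + 1 / 2) = ln r).
  { unfold r, gg. rewrite ln4 by lra. replace (x - 1/2 + 1/2) with x by ring.
    replace (x + 1/2 + 1/2) with (x + 1) by field. ring. }
  rewrite E. pose proof (ln_ge_1inv r Hr).
  replace (1 - / r) with (ff x) in H. exact H.
  unfold r, ff. field. repeat split; lra.
Qed.

Definition e0 (z : R) : R := / (4 * z * (z + 1/2) * (z + 1)).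

Lemma Fs_lower z m : 0 < z -> e0 z + / (2 * z) - / (2 * (z + INR m + 1)) <= Fs z (S m).
Proof.
  intros Hz. induction m as [|m IH].
  - rewrite Fs_S. unfold Fs, ff, e0. simpl. right. field. lra.
  - rewrite Fs_S. pose proof (ff_lower (z + INR (S m)) ltac:(pose proof (pos_INR (S m)); lra)).
    rewrite S_INR in *. 
    replace (/ 2 * (/ (z + (INR m + 1)) - / (z + (INR m + 1) + 1))) with
       (/ (2 * (z + INR m + 1)) - / (2 * (z + (INR m + 1) + 1))) in H
      by (pose proof (pos_INR m); field; lra).
    lra.
Qed.

Lemma Fs_upper z m : 0 < z -> Fs z (S m) <= ff z + gg (z + 1/2) - gg (z + INR m + 1/2).
Proof.
  intros Hz. induction m as [|m IH].
  - rewrite Fs_S. unfold Fs. simpl. rewrite !Rplus_0_r. lra.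
  - rewrite Fs_S. pose proof (pos_INR m).
    pose proof (ff_upper (z + INR (S m)) ltac:(rewrite S_INR; lra)).
    rewrite S_INR in *.
    replace (z + (INR m + 1) - 1 / 2) with (z + INR m + 1 / 2) in H0 by field.
    replace (z + (INR m + 1) + 1 / 2) with (z + (INR m + 1) + 1 / 2) in H0 by ring.
    lra.
Qed.

Lemma Delta_bounds z m : 0 < z ->
  ln (z + INR (S m) - 1/2) - ln (z + INR (S m)) + Fs z (S m) <= Dg (z + 1/2) - Dg z <=
  ln (z + 1/2 + INR (S m)) - ln (z + INR (S m) - 1) + Fs z (S m).
Proof.
  intros Hz. set (N := S m).
  assert (HN : 1 <= INR N) by (unfold N; rewrite S_INR; pose proof (pos_INR m); lra).
  pose proof (Dg_shift_n z N Hz) as E1.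
  pose proof (Dg_shift_n (z + 1/2) N ltac:(lra)) as E2.
  pose proof (Dg_upper (z + INR N) ltac:(lra)).
  pose proof (Dg_lower (z + INR N) ltac:(lra)).
  pose proof (Dg_upper (z + 1/2 + INR N) ltac:(lra)).
  pose proof (Dg_lower (z + 1/2 + INR N) ltac:(lra)).
  replace (z + 1 / 2 + INR N - 1) with (z + INR N - 1/2) in H2 by field.
  unfold Fs. lra.
Qed.

Theorem lemma3 (z : R) (hz : 0 < z) :
  1 / (2 * z) < digamma (z + 1 / 2) - digamma z /\
  digamma (z + 1 / 2) - digamma z < ln (1 + 1 / (2 * z)) + 1 / z - 2 / (2 * z + 1).
Proof.
  rewrite !digamma_Dg by lra.
  assert (He0 : 0 < e0 z) by (unfold e0; apply Rinv_0_lt_compat; repeat apply Rmult_lt_0_compat; lra).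
  set (e1 := / 4 * / ((z + 1/2) * (z + 1/2))).
  assert (He1 : 0 < e1) by (unfold e1; apply Rmult_lt_0_compat; [lra|apply Rinv_0_lt_compat; nra]).
  destruct (archi (Rmax (2 / e0 z) (3 / (2 * e1)))) as [m Hm].
  pose proof (Rmax_l (2 / e0 z) (3 / (2 * e1))). pose proof (Rmax_r (2 / e0 z) (3 / (2 * e1))).
  assert (Hm0 : 0 < INR m).
  { assert (0 < 2 / e0 z) by (apply Rdiv_lt_0_compat; lra). lra. }
  destruct (Delta_bounds z m hz) as [DL DU].
  rewrite S_INR in DL, DU.
  split.
  - pose proof (Fs_lower z m hz).
    pose proof (ln_quot_bounds (z + INR m + 1/2) (1/2) ltac:(lra) ltac:(lra)) as [_ Q].
    replace (z + INR m + 1 / 2 + 1 / 2) with (z + (INR m + 1)) in Q by field.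
    replace (z + (INR m + 1) - 1 / 2) with (z + INR m + 1/2) in DL by field.
    assert (Q2 : ln (z + (INR m + 1)) - ln (z + INR m + 1 / 2) <= / 2 * / (z + INR m + 1/2)).
    { apply Rmult_le_reg_r with (/ (1/2)). apply Rinv_0_lt_compat; lra.
      replace (/ 2 * / (z + INR m + 1 / 2) * / (1 / 2)) with (/ (z + INR m + 1/2)) by (field; lra).
      exact Q. }
    assert (Q3 : / (2 * (z + INR m + 1)) <= / 2 * / (z + INR m + 1/2)).
    { rewrite <- Rinv_mult. apply Rinv_le_contravar. nra. lra. }
    assert (Q4 : / (z + INR m + 1/2) < e0 z / 2).
    { apply Rlt_trans with (/ INR m). apply Rinv_lt_contravar. nra. lra.
      replace (e0 z / 2) with (/ (2 / e0 z)) by (field; lra).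
      apply Rinv_lt_contravar. apply Rmult_lt_0_compat. apply Rdiv_lt_0_compat; lra. lra. lra. }
    replace (1 / (2 * z)) with (/ (2 * z)) by (field; lra).
    lra.
  - pose proof (Fs_upper z m hz).
    assert (Hgg : 0 <= gg (z + INR m + 1/2)).
    { unfold gg. pose proof (ln_le (z + INR m + 1/2) (z + INR m + 1/2 + 1/2) ltac:(lra) ltac:(lra)). lra. }
    assert (Hgap : e1 <= gg z - gg (z + 1/2)).
    { set (r := ((z + 1/2) * (z + 1/2)) * / (z * (z + 1))).
      assert (Hr : 0 < r) by (unfold r; apply Rmult_lt_0_compat; [nra|apply Rinv_0_lt_compat; nra]).
      assert (E : gg z - gg (z + 1/2) = ln r).
      { unfold r, gg. rewrite ln4 by lra. replace (z + 1/2 + 1/2) with (z + 1) by field. ring. }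
      rewrite E. pose proof (ln_ge_1inv r Hr) as Hq.
      replace (1 - / r) with e1 in Hq. exact Hq. unfold e1, r. field. repeat split; lra. }
    pose proof (ln_quot_bounds (z + INR m) (3/2) ltac:(lra) ltac:(lra)) as [_ Q].
    replace (z + INR m + 3 / 2) with (z + 1 / 2 + (INR m + 1)) in Q by field.
    replace (z + (INR m + 1) - 1) with (z + INR m) in DU by ring.
    assert (Q2 : ln (z + 1 / 2 + (INR m + 1)) - ln (z + INR m) <= 3 / 2 * / (z + INR m)).
    { apply Rmult_le_reg_r with (/ (3/2)). apply Rinv_0_lt_compat; lra.
      replace (3 / 2 * / (z + INR m) * / (3 / 2)) with (/ (z + INR m)) by (field; lra).
      exact Q. }
    assert (Q4 : / (z + INR m) < 2 / 3 * e1).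
    { apply Rlt_trans with (/ INR m). apply Rinv_lt_contravar. nra. lra.
      replace (2 / 3 * e1) with (/ (3 / (2 * e1))) by (field; lra).
      apply Rinv_lt_contravar. apply Rmult_lt_0_compat. apply Rdiv_lt_0_compat; lra. lra. lra. }
    assert (Eg : ln (1 + 1 / (2 * z)) = gg z).
    { unfold gg. replace (1 + 1 / (2 * z)) with ((z + 1/2) * / z) by (field; lra).
      rewrite ln_mult, ln_Rinv; try lra. apply Rinv_0_lt_compat; lra. }
    assert (Ef : 1 / z - 2 / (2 * z + 1) = ff z) by (unfold ff; field; lra).
    rewrite Eg. unfold Rminus at 2. rewrite Rplus_assoc. fold (1 / z - 2 / (2 * z + 1)). rewrite Ef.
    lra.
Qed.
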